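(* Let $Q$ be a finite loop and $S$ a subloop of $Q$. For $x\in Q$ let $O_x(Q,S)$ denote the orbit of $x$ under the permutation group $\langle R_s : s\in S\rangle$ acting naturally on $Q$, where $R_s:Q\to Q$, $y\mapsto ys$. (i) If $|O_x(Q,S)|$ is a multiple of $|S|$ for every $x\in Q$, then $|S|$ divides $|Q|$. (ii) If $O_x(Q,S)$ can be written as a disjoint union of left cosets of $S$ for every $x\in Q$, then $Q$ has a left coset partition modulo $S$, i.e., there is a subset of the left cosets $\{yS: y\in Q\}$ that partitions $Q$.
   Context: For $y\in Q$, $yS=\{ys:s\in S\}$ is the left coset of $S$ with representative $y$. *)

(* Defs.v *)
From mathcomp Require Import all_boot.
Set Implicit Arguments. Unset Strict Implicit. Unset Printing Implicit Defensive.

Definition is_loop (T : finType) (mul : T -> T -> T) (e : T) : Prop :=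
  [/\ forall x, mul e x = x, forall x, mul x e = x,
      forall a, bijective (mul a) & forall a, bijective (fun y => mul y a)].

Definition is_subloop (T : finType) (mul : T -> T -> T) (e : T) (S : {set T}) : Prop :=
  [/\ e \in S,
      forall a b, a \in S -> b \in S -> mul a b \in S,
      forall a b x, a \in S -> b \in S -> mul a x = b -> x \in S &
      forall a b y, a \in S -> b \in S -> mul y a = b -> y \in S].

Definition Rtrans (T : finType) (mul : T -> T -> T) (s : T) : T -> T := fun y => mul y s.

Definition Rstep (T : finType) (mul : T -> T -> T) (S : {set T}) : rel T :=
  fun a b => [exists s in S, (Rtrans mul s a == b) || (Rtrans mul s b == a)].

(* Orbit of x under the permutation group < R_s : s in S >: all points reached
   from x by finite words in the generators R_s and their inverses. *)
Definition orbitQS (T : finType) (mul : T -> T -> T) (S : {set T}) (x : T) : {set T} :=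
  [set y | connect (Rstep mul S) x y].

Definition lcoset (T : finType) (mul : T -> T -> T) (y : T) (S : {set T}) : {set T} :=
  [set mul y s | s in S].

Definition lcoset_family (T : finType) (mul : T -> T -> T) (S : {set T})
  (P : {set {set T}}) : Prop :=
  forall C, C \in P -> exists y, C = lcoset mul y S.

(* Main.v *)
Require Import Defs.
From mathcomp Require Import all_boot.
From Stdlib Require Import ClassicalEpsilon.

Section Aux.
Variables (T : finType) (mul : T -> T -> T) (S : {set T}).
Let e := Rstep mul S.

Lemma Rstep_sym : connect_sym e.
Proof.
apply: sym_connect_sym => a b; rewrite /e /Rstep.
by apply/existsP/existsP => -[s /andP[sS H]]; exists s; rewrite sS orbC.
Qed.

Lemma orbit_eq x y : connect e x y -> orbitQS mul S x = orbitQS mul S y.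
Proof.
move=> cxy; apply/setP => z; rewrite !inE.
by rewrite (same_connect Rstep_sym cxy).
Qed.

Lemma orbit_part :
  partition (equivalence_partition (connect e) [set: T]) [set: T].
Proof.
apply: equivalence_partitionP => x y z _ _ _ /=; split; first exact: connect0.
move=> cxy; exact: (same_connect Rstep_sym cxy z).
Qed.

Lemma orbit_block A : A \in equivalence_partition (connect e) [set: T] ->
  exists x, A = orbitQS mul S x.
Proof.
case/imsetP => x _ ->; exists x; apply/setP => z; by rewrite !inE.
Qed.
End Aux.

Theorem lemma5p3 (T : finType) (mul : T -> T -> T) (e : T) (S : {set T}) :
  is_loop mul e -> is_subloop mul e S ->
  ((forall x : T, #|S| %| #|orbitQS mul S x|) -> #|S| %| #|T|) /\
  ((forall x : T, exists P : {set {set T}},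
       lcoset_family mul S P /\ partition P (orbitQS mul S x)) ->
   exists P : {set {set T}}, lcoset_family mul S P /\ partition P [set: T]).
Proof.
move=> _ _; split.
  move=> H; rewrite -cardsT (card_partition (orbit_part T mul S)).
  apply: dvdn_sum => A /orbit_block[x ->]; exact: H.
move=> H.
pose f x := proj1_sig (constructive_indefinite_description _ (H x)).
have fP x : lcoset_family mul S (f x) /\ partition (f x) (orbitQS mul S x).
  exact: proj2_sig (constructive_indefinite_description _ (H x)).
pose r x := root (Rstep mul S) x.
have rx x : connect (Rstep mul S) x (r x) by apply: connect_root.
have orx x : orbitQS mul S (r x) = orbitQS mul S x.
  by apply/esym/orbit_eq.
have fPr x : partition (f (r x)) (orbitQS mul S x) by rewrite -orx; case: (fP (r x)).
exists (\bigcup_(x in T) f (r x)); split.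
  move=> C /bigcupP[x _ Cx]; by case: (fP (r x)) => /(_ C Cx).
apply/and3P; split.
- rewrite eqEsubset subsetT /=; apply/subsetP => x _.
  have : x \in orbitQS mul S x by rewrite inE connect0.
  rewrite -(cover_partition (fPr x)) => /bigcupP[C Cx xC].
  apply/bigcupP; exists C => //; apply/bigcupP; exists x => //.
- apply/trivIsetP => A B /bigcupP[x _ Ax] /bigcupP[y _ By] AB.
  case cxy: (connect (Rstep mul S) x y).
    move: Ax; rewrite /r (rootP (Rstep_sym T mul S) cxy) => Ax.
    move: (partition_trivIset (fPr y)) => /trivIsetP; apply => //.
  apply/pred0P => z /=; apply/negbTE/negP => /andP[zA zB].
  have zx := subsetP (partitionS (fPr x) Ax) z zA.
  have zy := subsetP (partitionS (fPr y) By) z zB.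
  move: zx zy; rewrite !inE => zx zy.
  move: cxy; rewrite (connect_trans zx) //; rewrite Rstep_sym //.
- apply/negP => /bigcupP[x _ x0].
  by rewrite (partition0 (fPr x)) in x0.
Qed.
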